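(* For every BIMS channel with capacity $C$, the channel dispersion satisfies $$V^{\rm bec}(C)\le V\le V^{\rm bsc}(C).$$
   Context: A BIMS (binary-input memoryless symmetric) channel is a memoryless channel with input alphabet $\{x_0,x_1\}$, finite output alphabet $\mathcal Y$ and transition probabilities $P_{Y|X}(y|x)$. It is symmetric in Gallager's sense: the columns of the $2\times|\mathcal Y|$ transition matrix (rows indexed by inputs) can be partitioned into submatrices such that, in each submatrix, every row is a permutation of every other row and every column is a permutation of every other column. Inputs are equiprobable and logarithms are base 2. The capacity $C$ is $I(X;Y)$ under equiprobable inputs. For $\rho>-1$, $$F(\rho)=\sum_{x}\tfrac12\sum_{y:\,P_{Y|X}(y|x)>0}P_{Y|X}(y|x)\left(\frac{\tfrac12\sum_{x'}P_{Y|X}(y|x')^{1/(1+\rho)}}{P_{Y|X}(y|x)^{1/(1+\rho)}}\right)^{\rho},$$ and $E_0(\rho)=-\log F(\rho)$. The dispersion is $V=-E_0''(0)$. $V^{\rm bec}(C)$ and $V^{\rm bsc}(C)$ are $-\frac{d^2}{d\rho^2}\bigl(-\log F^{\rm bec}(\rho;C)\bigr)\big|_{\rho=0}$ and $-\frac{d^2}{d\rho^2}\bigl(-\log F^{\rm bsc}(\rho;C)\bigr)\big|_{\rho=0}$, respectively, where $$F^{\rm bec}(\rho;C)=1+(2^{-\rho}-1)C,$$ $$F^{\rm bsc}(\rho;C)=2^{-\rho}\bigl(\varepsilon^{1/(1+\rho)}+(1-\varepsilon)^{1/(1+\rho)}\bigr)^{1+\rho},\qquad \varepsilon=h^{-1}(1-C),$$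 $h$ is the binary entropy function and $h^{-1}$ its inverse on $[0,\tfrac12]$. *)

(* Defs.v *)
From Stdlib Require Import Reals Lra List Permutation Arith.
Import ListNotations.
Open Scope R_scope.

Definition sumR (m : nat) (f : nat -> R) : R :=
  fold_right Rplus 0 (map f (seq 0 m)).

Definition log2 (x : R) : R := ln x / ln 2.

(** Real power x^y for x >= 0 with the convention 0^y = 0 (used for y > 0).
    (Stdlib's [Rpower 0 y] would be 1, so we guard it.) *)
Definition pw (x y : R) : R := if Rle_dec x 0 then 0 else Rpower x y.

Definition xlog2 (x : R) : R := if Rle_dec x 0 then 0 else x * log2 x.
Definition hb (p : R) : R := - xlog2 p - xlog2 (1 - p).

(** A channel: inputs x0 = false, x1 = true; outputs 0..m-1;
    P x y = P_{Y|X}(y|x). *)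
Definition is_channel (m : nat) (P : bool -> nat -> R) : Prop :=
  (forall x y, (y < m)%nat -> 0 <= P x y) /\
  (forall x, sumR m (P x) = 1).

(** Gallager symmetry for a 2-row matrix: the columns are partitioned into
    blocks (labelled by [blk]); inside each block the two rows are
    permutations of each other, and every column is a permutation of every
    other column. *)
Definition gallager_symmetric (m : nat) (P : bool -> nat -> R) : Prop :=
  exists blk : nat -> nat,
    (forall b : nat,
        Permutation
          (map (P false) (filter (fun y => Nat.eqb (blk y) b) (seq 0 m)))
          (map (P true)  (filter (fun y => Nat.eqb (blk y) b) (seq 0 m)))) /\
    (forall y y', (y < m)%nat -> (y' < m)%nat -> blk y = blk y' ->
        Permutation [P false y; P true y] [P false y'; P true y']).

Definition is_BIMS (m : nat) (P : bool -> nat -> R) : Prop :=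
  is_channel m P /\ gallager_symmetric m P.

Definition PY (P : bool -> nat -> R) (y : nat) : R :=
  / 2 * (P false y + P true y).

Definition avgX (g : bool -> R) : R := / 2 * g false + / 2 * g true.

Definition capacity (m : nat) (P : bool -> nat -> R) : R :=
  avgX (fun x => sumR m (fun y =>
    if Rlt_dec 0 (P x y) then P x y * log2 (P x y / PY P y) else 0)).

Definition F (m : nat) (P : bool -> nat -> R) (rho : R) : R :=
  avgX (fun x => sumR m (fun y =>
    if Rlt_dec 0 (P x y) then
      P x y *
      pw ((/ 2 * (pw (P false y) (/ (1 + rho)) + pw (P true y) (/ (1 + rho))))
           / pw (P x y) (/ (1 + rho))) rho
    else 0)).

Definition E0 (m : nat) (P : bool -> nat -> R) (rho : R) : R :=
  - log2 (F m P rho).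

Definition Fbec (rho C : R) : R := 1 + (Rpower 2 (- rho) - 1) * C.

Definition Fbsc (rho eps : R) : R :=
  Rpower 2 (- rho) *
  pw (pw eps (/ (1 + rho)) + pw (1 - eps) (/ (1 + rho))) (1 + rho).

Definition second_deriv (f : R -> R) (x0 l : R) : Prop :=
  exists (f' : R -> R) (delta : R),
    0 < delta /\
    (forall x, Rabs (x - x0) < delta -> derivable_pt_lim f x (f' x)) /\
    derivable_pt_lim f' x0 l.

(* Main.v *)
Require Import Defs.
From Stdlib Require Import Reals Lra Lia List.
Open Scope R_scope.


Definition D2 (f : R -> R) (d0 d1 d2 : R) : Prop :=
  exists f' : R -> R,
    (forall x, Rabs x < /2 -> derivable_pt_lim f x (f' x)) /\
    f 0 = d0 /\ f' 0 = d1 /\ derivable_pt_lim f' 0 d2.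

Lemma D2_const c : D2 (fun _ => c) c 0 0.
Proof.
  exists (fun _ => 0). repeat split.
  - intros x _. apply (derivable_pt_lim_const c x).
  - apply (derivable_pt_lim_const 0 0).
Qed.

Lemma D2_id : D2 (fun x => x) 0 1 0.
Proof.
  exists (fun _ => 1). repeat split.
  - intros x _. apply (derivable_pt_lim_id x).
  - apply (derivable_pt_lim_const 1 0).
Qed.

Lemma D2_plus f g a0 a1 a2 b0 b1 b2 :
  D2 f a0 a1 a2 -> D2 g b0 b1 b2 ->
  D2 (fun x => f x + g x) (a0 + b0) (a1 + b1) (a2 + b2).
Proof.
  intros [f' [Hf [H0 [H1 H2]]]] [g' [Hg [K0 [K1 K2]]]].
  exists (fun x => f' x + g' x). repeat split.
  - intros x Hx. apply (derivable_pt_lim_plus f g x); auto.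
  - simpl; lra.
  - simpl; lra.
  - apply (derivable_pt_lim_plus f' g' 0); auto.
Qed.

Lemma D2_mult f g a0 a1 a2 b0 b1 b2 :
  D2 f a0 a1 a2 -> D2 g b0 b1 b2 ->
  D2 (fun x => f x * g x) (a0 * b0) (a1 * b0 + a0 * b1)
     (a2 * b0 + 2 * a1 * b1 + a0 * b2).
Proof.
  intros [f' [Hf [H0 [H1 H2]]]] [g' [Hg [K0 [K1 K2]]]].
  assert (Z : Rabs 0 < /2) by (rewrite Rabs_R0; lra).
  exists (fun x => f' x * g x + f x * g' x). repeat split.
  - intros x Hx. apply (derivable_pt_lim_mult f g x); auto.
  - rewrite H0, K0; lra.
  - rewrite H0, K0, H1, K1; lra.
  - replace (a2 * b0 + 2 * a1 * b1 + a0 * b2) with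
      ((a2 * g 0 + f' 0 * b1) + (a1 * g' 0 + f 0 * b2)) by (rewrite H0, K0, H1, K1; ring).
    apply (derivable_pt_lim_plus (fun x => f' x * g x) (fun x => f x * g' x) 0).
    + apply (derivable_pt_lim_mult f' g 0); auto. rewrite <- K1; auto.
    + apply (derivable_pt_lim_mult f g' 0); auto. rewrite <- H1; auto.
Qed.

Lemma D2_comp (phi phi1 : R -> R) (Dm : R -> Prop) f a0 a1 a2 c2 :
  D2 f a0 a1 a2 ->
  (forall x, Rabs x < /2 -> Dm (f x)) ->
  (forall z, Dm z -> derivable_pt_lim phi z (phi1 z)) ->
  derivable_pt_lim phi1 a0 c2 ->
  D2 (fun x => phi (f x)) (phi a0) (phi1 a0 * a1) (c2 * a1 * a1 + phi1 a0 * a2).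
Proof.
  intros [f' [Hf [H0 [H1 H2]]]] HD Hphi Hphi1.
  assert (Z : Rabs 0 < /2) by (rewrite Rabs_R0; lra).
  exists (fun x => phi1 (f x) * f' x). repeat split.
  - intros x Hx. change (derivable_pt_lim (comp phi f) x (phi1 (f x) * f' x)).
    apply (derivable_pt_lim_comp f phi x (f' x) (phi1 (f x))). apply Hf; auto. apply Hphi; auto.
  - rewrite H0; auto.
  - rewrite H0, H1; auto.
  - replace (c2 * a1 * a1 + phi1 a0 * a2) with
      ((c2 * a1) * f' 0 + phi1 (f 0) * a2) by (rewrite H0, H1; ring).
    assert (Hc : derivable_pt_lim (comp phi1 f) 0 (c2 * a1)).
    { rewrite <- H1. apply (derivable_pt_lim_comp f phi1 0 (f' 0) c2). apply Hf; auto. rewrite H0; auto. }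
    exact (derivable_pt_lim_mult (comp phi1 f) f' 0 _ _ Hc H2).
Qed.

Lemma D2_exp f a0 a1 a2 : D2 f a0 a1 a2 ->
  D2 (fun x => exp (f x)) (exp a0) (exp a0 * a1) (exp a0 * a1 * a1 + exp a0 * a2).
Proof.
  intro H. apply (D2_comp exp exp (fun _ => True)); auto.
  intros; apply derivable_pt_lim_exp. apply derivable_pt_lim_exp.
Qed.

Lemma derivable_pt_lim_Rinv z : z <> 0 -> derivable_pt_lim Rinv z (- / (z * z)).
Proof.
  intro Hz.
  apply (derivable_pt_lim_ext (fun x => 1 / x)). intro; unfold Rdiv; ring.
  replace (- / (z * z)) with ((0 * z - 1 * 1) / (z)²) by (unfold Rsqr; field; auto).
  apply (derivable_pt_lim_div (fct_cte 1) id z 0 1).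
  apply derivable_pt_lim_const. apply derivable_pt_lim_id. auto.
Qed.

Lemma D2_ln f a0 a1 a2 : D2 f a0 a1 a2 ->
  (forall x, Rabs x < /2 -> 0 < f x) -> 0 < a0 ->
  D2 (fun x => ln (f x)) (ln a0) (/ a0 * a1) (- / (a0 * a0) * a1 * a1 + / a0 * a2).
Proof.
  intros H Hp Ha. apply (D2_comp ln Rinv (fun z => 0 < z)); auto.
  intros; apply derivable_pt_lim_ln; auto.
  apply derivable_pt_lim_Rinv; lra.
Qed.

Lemma D2_inv f a0 a1 a2 : D2 f a0 a1 a2 ->
  (forall x, Rabs x < /2 -> 0 < f x) -> 0 < a0 ->
  D2 (fun x => / (f x)) (/ a0) (- / (a0 * a0) * a1)
     (2 / (a0 * a0 * a0) * a1 * a1 + - / (a0 * a0) * a2).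
Proof.
  intros H Hp Ha.
  apply (D2_comp Rinv (fun z => - / (z * z)) (fun z => 0 < z)); auto.
  intros; apply derivable_pt_lim_Rinv; lra.
  apply (derivable_pt_lim_ext (fun z => - (/ z * / z))). intro z.
  destruct (Req_dec z 0). subst; rewrite Rmult_0_l, Rinv_0; ring. field; auto.
  replace (2 / (a0 * a0 * a0)) with (- ((- / (a0*a0)) * / a0 + / a0 * (- / (a0*a0)))) by (field; lra).
  apply derivable_pt_lim_opp.
  apply (derivable_pt_lim_mult Rinv Rinv a0); apply derivable_pt_lim_Rinv; lra.
Qed.

Lemma D2_ext f g a0 a1 a2 : D2 f a0 a1 a2 ->
  (forall x, Rabs x < /2 -> f x = g x) -> D2 g a0 a1 a2.
Proof.
  intros [f' [Hf [H0 [H1 H2]]]] E.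
  assert (Z : Rabs 0 < /2) by (rewrite Rabs_R0; lra).
  exists f'. repeat split; auto.
  - intros x Hx. apply (derivable_pt_lim_locally_ext f g x (-/2) (/2)).
    apply Rabs_def2 in Hx; lra.
    intros z Hz. apply E. apply Rabs_def1; lra.
    auto.
  - rewrite <- E; auto.
Qed.

Lemma D2_eq f a0 a1 a2 b0 b1 b2 : D2 f a0 a1 a2 -> a0 = b0 -> a1 = b1 -> a2 = b2 -> D2 f b0 b1 b2.
Proof. intros H <- <- <-; auto. Qed.

Definition Tgen (K al be l0 l1 lx r : R) : R :=
  K * exp (r * ln ((al * exp (l0 * / (1 + r)) + be * exp (l1 * / (1 + r)))
                   * exp ((- lx) * / (1 + r)))).

Lemma D2_s : D2 (fun r => / (1 + r)) 1 (-1) 2.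
Proof.
  eapply D2_eq.
  apply D2_inv. apply D2_plus. apply D2_const. apply D2_id.
  intros x Hx; apply Rabs_def2 in Hx; lra. lra.
  field. field. field.
Qed.

Lemma D2_Tgen K al be l0 l1 lx :
  0 <= al -> 0 <= be -> 0 < al + be ->
  let Q0 := al * exp l0 + be * exp l1 in
  let N0 := al * l0 * exp l0 + be * l1 * exp l1 in
  let g0 := ln Q0 - lx in
  let g1 := lx - N0 / Q0 in
  D2 (Tgen K al be l0 l1 lx) K (K * g0) (K * (g0 * g0 + 2 * g1)).
Proof.
  intros Ha Hb Hab Q0 N0 g0 g1.
  assert (HQ : 0 < Q0).
  { unfold Q0. assert (0 < exp l0) by apply exp_pos. assert (0 < exp l1) by apply exp_pos.
    assert (0 <= al * exp l0) by (apply Rmult_le_pos; lra).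
    assert (0 <= be * exp l1) by (apply Rmult_le_pos; lra).
    destruct (Rle_lt_dec al 0). assert (al = 0) by lra. subst al.
    assert (0 < be * exp l1) by (apply Rmult_lt_0_compat; lra). lra.
    assert (0 < al * exp l0) by (apply Rmult_lt_0_compat; lra). lra. }
  unfold Tgen.
  eapply D2_eq.
  apply D2_mult. apply D2_const.
  apply D2_exp. apply D2_mult. apply D2_id.
  apply D2_ln.
  apply D2_mult. apply D2_plus.
  apply D2_mult. apply D2_const. apply D2_exp. apply D2_mult. apply D2_const. apply D2_s.
  apply D2_mult. apply D2_const. apply D2_exp. apply D2_mult. apply D2_const. apply D2_s.
  apply D2_exp. apply D2_mult. apply D2_const. apply D2_s.
  { intros x _. apply Rmult_lt_0_compat; [|apply exp_pos].
    assert (0 < exp (l0 * / (1 + x))) by apply exp_pos.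
    assert (0 < exp (l1 * / (1 + x))) by apply exp_pos.
    assert (0 <= al * exp (l0 * / (1 + x))) by (apply Rmult_le_pos; lra).
    assert (0 <= be * exp (l1 * / (1 + x))) by (apply Rmult_le_pos; lra).
    destruct (Rle_lt_dec al 0). assert (al = 0) by lra. subst al.
    assert (0 < be * exp (l1 * / (1 + x))) by (apply Rmult_lt_0_compat; lra). lra.
    assert (0 < al * exp (l0 * / (1 + x))) by (apply Rmult_lt_0_compat; lra). lra. }
  { apply Rmult_lt_0_compat; [|apply exp_pos]. repeat rewrite Rmult_1_r. exact HQ. }
  - rewrite Rmult_0_l, exp_0. ring.
  - repeat rewrite Rmult_1_r. 
    rewrite ln_mult, ln_exp; [|exact HQ|apply exp_pos].
    repeat rewrite Rmult_0_l. rewrite exp_0. unfold g0, Q0. ring.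
  - repeat rewrite Rmult_1_r.
    rewrite ln_mult, ln_exp; [|exact HQ|apply exp_pos].
    repeat rewrite Rmult_0_l. rewrite exp_0. unfold g0, g1, N0. 
    rewrite exp_Ropp. unfold Q0 in *.
    assert (E1: exp lx <> 0) by (apply Rgt_not_eq, exp_pos).
    assert (E2: al*exp l0 + be*exp l1 <> 0) by lra. field. repeat split; auto.
Qed.

Definition sumL (l : list nat) (f : nat -> R) := fold_right Rplus 0 (map f l).

Lemma sumR_L m f : sumR m f = sumL (seq 0 m) f.
Proof. reflexivity. Qed.

Lemma sumL_ext l f g : (forall y, In y l -> f y = g y) -> sumL l f = sumL l g.
Proof.
  induction l; simpl; intros H; auto.
  unfold sumL in *; simpl. rewrite H, IHl; auto.
Qed.

Lemma sumL_plus l f g : sumL l (fun y => f y + g y) = sumL l f + sumL l g.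
Proof. induction l; unfold sumL in *; simpl; [ring|rewrite IHl; ring]. Qed.

Lemma sumL_scal l c f : sumL l (fun y => c * f y) = c * sumL l f.
Proof. induction l; unfold sumL in *; simpl; [ring|rewrite IHl; ring]. Qed.

Lemma sumL_zero l : sumL l (fun _ => 0) = 0.
Proof. induction l; unfold sumL in *; simpl; [ring|rewrite IHl; ring]. Qed.

Lemma sumL_nonneg l f : (forall y, In y l -> 0 <= f y) -> 0 <= sumL l f.
Proof.
  induction l; unfold sumL in *; simpl; intros H. lra.
  assert (0 <= f a) by auto. assert (0 <= fold_right Rplus 0 (map f l)) by auto. lra.
Qed.

Lemma sumL_le l f g : (forall y, In y l -> f y <= g y) -> sumL l f <= sumL l g.
Proof.
  induction l; unfold sumL in *; simpl; intros H. lra.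
  assert (f a <= g a) by auto. assert (fold_right Rplus 0 (map f l) <= fold_right Rplus 0 (map g l)) by auto. lra.
Qed.

Lemma sumL_zero_each l f : (forall y, In y l -> 0 <= f y) -> sumL l f = 0 ->
  forall y, In y l -> f y = 0.
Proof.
  induction l; unfold sumL in *; simpl; intros H E y Hy. contradiction.
  assert (0 <= f a) by auto.
  assert (0 <= fold_right Rplus 0 (map f l)) by (apply sumL_nonneg; auto).
  destruct Hy as [<-|Hy]. lra. apply IHl; auto. lra.
Qed.

Lemma D2_sumL (g : nat -> R -> R) a b c l :
  (forall y, In y l -> D2 (g y) (a y) (b y) (c y)) ->
  D2 (fun r => sumL l (fun y => g y r)) (sumL l a) (sumL l b) (sumL l c).
Proof.
  induction l; intros H; unfold sumL in *; simpl.
  - apply D2_const.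
  - apply (D2_plus (g a0) (fun r => fold_right Rplus 0 (map (fun y => g y r) l))).
    apply H; left; auto. apply IHl; intros; apply H; right; auto.
Qed.

Lemma D2_avgX (G : bool -> R -> R) a b c :
  (forall x, D2 (G x) (a x) (b x) (c x)) ->
  D2 (fun r => avgX (fun x => G x r)) (avgX a) (avgX b) (avgX c).
Proof.
  intros H. unfold avgX.
  eapply D2_eq. apply D2_plus; apply D2_mult; [apply D2_const|apply H|apply D2_const|apply H].
  ring. ring. ring.
Qed.

Lemma D2_second f a0 a1 a2 : D2 f a0 a1 a2 -> second_deriv f 0 a2.
Proof.
  intros [f' [H [_ [_ H2]]]]. exists f', (/2). repeat split; auto. lra.
  intros x Hx. apply H. rewrite Rminus_0_r in Hx; auto.
Qed.

Definition cind (p : R) : R := if Rle_dec p 0 then 0 else 1.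
Definition xl (p : R) : R := if Rle_dec p 0 then 0 else p * ln p.

Lemma pw_exp p y : pw p y = cind p * exp (ln p * y).
Proof. unfold pw, cind, Rpower. destruct (Rle_dec p 0); [ring|rewrite Rmult_comm; ring]. Qed.

Lemma cind_exp p : 0 <= p -> cind p * exp (ln p) = p.
Proof. unfold cind; intros; destruct (Rle_dec p 0). lra. rewrite exp_ln; lra. Qed.

Lemma cind_xl p : 0 <= p -> cind p / 2 * ln p * exp (ln p) = / 2 * xl p.
Proof. unfold cind, xl; intros; destruct (Rle_dec p 0). field. rewrite exp_ln; [field|lra]. Qed.

Lemma cind_exp2 p : 0 <= p -> cind p / 2 * exp (ln p) = p / 2.
Proof. unfold cind; intros; destruct (Rle_dec p 0). replace p with 0 by lra. field. rewrite exp_ln; [field|lra]. Qed.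

Lemma cind_nonneg p : 0 <= cind p.
Proof. unfold cind; destruct (Rle_dec p 0); lra. Qed.

Lemma D2_term (p0 p1 px : R) : 0 <= p0 -> 0 <= p1 -> 0 < px -> (px = p0 \/ px = p1) ->
  D2 (fun r => px * pw ((/2 * (pw p0 (/(1+r)) + pw p1 (/(1+r)))) / pw px (/(1+r))) r)
    px (px * (ln (/2*(p0+p1)) - ln px))
    (px * ((ln (/2*(p0+p1)) - ln px) * (ln (/2*(p0+p1)) - ln px)
          + 2*(ln px - (/2*(xl p0 + xl p1)) / (/2*(p0+p1))))).
Proof.
  intros H0 H1 Hx Hor.
  assert (Hc : 0 < cind p0 / 2 + cind p1 / 2).
  { unfold cind. destruct (Rle_dec p0 0); destruct (Rle_dec p1 0); destruct Hor; lra. }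
  assert (Hpy : 0 < / 2 * (p0 + p1)) by (destruct Hor; lra).
  eapply D2_eq.
  eapply D2_ext.
  apply (D2_Tgen px (cind p0 / 2) (cind p1 / 2) (ln p0) (ln p1) (ln px)).
  unfold Rdiv; apply Rmult_le_pos; [apply cind_nonneg|lra].
  unfold Rdiv; apply Rmult_le_pos; [apply cind_nonneg|lra]. exact Hc.
  - intros r Hr. unfold Tgen. f_equal.
    rewrite (pw_exp p0), (pw_exp p1), (pw_exp px).
    assert (Hcx : cind px = 1) by (unfold cind; destruct (Rle_dec px 0); lra).
    rewrite Hcx.
    set (R0 := (/ 2 * (cind p0 * exp (ln p0 * / (1 + r)) + cind p1 * exp (ln p1 * / (1 + r))) /
      (1 * exp (ln px * / (1 + r))))).
    assert (E : R0 = (cind p0 / 2 * exp (ln p0 * / (1 + r)) + cind p1 / 2 * exp (ln p1 * / (1 + r))) *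
       exp (- ln px * / (1 + r))).
    { unfold R0. rewrite Ropp_mult_distr_l_reverse, exp_Ropp. field. apply Rgt_not_eq, exp_pos. }
    assert (Rpos : 0 < R0).
    { rewrite E. apply Rmult_lt_0_compat; [|apply exp_pos].
      assert (0 < exp (ln p0 * / (1 + r))) by apply exp_pos.
      assert (0 < exp (ln p1 * / (1 + r))) by apply exp_pos.
      assert (0 <= cind p0 / 2) by (unfold Rdiv; apply Rmult_le_pos; [apply cind_nonneg|lra]).
      assert (0 <= cind p1 / 2) by (unfold Rdiv; apply Rmult_le_pos; [apply cind_nonneg|lra]).
      destruct (Rle_lt_dec (cind p0 / 2) 0).
      assert (cind p0 / 2 = 0) by lra. rewrite H5.
      assert (0 < cind p1 / 2 * exp (ln p1 * / (1 + r))) by (apply Rmult_lt_0_compat; lra). lra.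
      assert (0 < cind p0 / 2 * exp (ln p0 * / (1 + r))) by (apply Rmult_lt_0_compat; lra).
      assert (0 <= cind p1 / 2 * exp (ln p1 * / (1 + r))) by (apply Rmult_le_pos; lra). lra. }
    unfold pw. destruct (Rle_dec R0 0). lra. unfold Rpower. rewrite <- E. reflexivity.
  - reflexivity.
  - rewrite !cind_exp2 by lra. do 3 f_equal. field.
  - rewrite !cind_exp2 by lra. rewrite !cind_xl by lra.
    replace (p0 / 2 + p1 / 2) with (/ 2 * (p0 + p1)) by field. field. lra.
Qed.

Definition M2 (m : nat) (P : bool -> nat -> R) : R :=
  avgX (fun x => sumR m (fun y =>
    if Rlt_dec 0 (P x y) then P x y * (log2 (P x y / PY P y) * log2 (P x y / PY P y)) else 0)).

Lemma swap_avg l (f : bool -> nat -> R) :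
  avgX (fun x => sumL l (f x)) = sumL l (fun y => avgX (fun x => f x y)).
Proof. unfold avgX. rewrite sumL_plus, !sumL_scal. reflexivity. Qed.

Lemma ln_div_PY (a b : R) : 0 < a -> 0 <= b -> ln (a / (/2 * (a + b))) = ln a - ln (/2 * (a+b)).
Proof.
  intros. unfold Rdiv. rewrite ln_mult, ln_Rinv; try lra.
  apply Rinv_0_lt_compat; lra. 
Qed.

Lemma ln_div_PY' (a b : R) : 0 < a -> 0 <= b -> ln (a / (/2 * (b + a))) = ln a - ln (/2 * (b+a)).
Proof.
  intros. unfold Rdiv. rewrite ln_mult, ln_Rinv; try lra.
  apply Rinv_0_lt_compat; lra. 
Qed.

Lemma PY_ln (P : bool -> nat -> R) x y : 0 < P x y -> 0 <= P false y -> 0 <= P true y ->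
  ln (P x y / PY P y) = ln (P x y) - ln (PY P y).
Proof.
  intros. unfold PY. destruct x.
  apply ln_div_PY'; auto. apply ln_div_PY; auto.
Qed.

Lemma D2_F m P : is_channel m P ->
  D2 (F m P) 1 (- ln 2 * capacity m P) (ln 2 * ln 2 * M2 m P).
Proof.
  intros [Hnn Hsum].
  assert (L2 : 0 < ln 2) by (rewrite <- ln_1; apply ln_increasing; lra).
  unfold F.
  eapply D2_eq.
  apply (D2_avgX (fun x r => sumR m (fun y => if Rlt_dec 0 (P x y) then
      P x y * pw ((/2 * (pw (P false y) (/(1+r)) + pw (P true y) (/(1+r)))) / pw (P x y) (/(1+r))) r
      else 0))
    (fun x => sumL (seq 0 m) (fun y => if Rlt_dec 0 (P x y) then P x y else 0))
    (fun x => sumL (seq 0 m) (fun y => if Rlt_dec 0 (P x y) then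
        P x y * (ln (/2*(P false y + P true y)) - ln (P x y)) else 0))
    (fun x => sumL (seq 0 m) (fun y => if Rlt_dec 0 (P x y) then
        P x y * ((ln (/2*(P false y + P true y)) - ln (P x y)) * (ln (/2*(P false y + P true y)) - ln (P x y))
          + 2*(ln (P x y) - (/2*(xl (P false y) + xl (P true y))) / (/2*(P false y + P true y)))) else 0))).
  - intro x.
    apply (D2_sumL (fun y r => if Rlt_dec 0 (P x y) then
      P x y * pw ((/2 * (pw (P false y) (/(1+r)) + pw (P true y) (/(1+r)))) / pw (P x y) (/(1+r))) r
      else 0)).
    intros y Hy. apply in_seq in Hy.
    destruct (Rlt_dec 0 (P x y)).
    + apply D2_term; try (apply Hnn; lia); auto. destruct x; auto.
    + apply D2_const.
  -
    assert (H: forall x, sumL (seq 0 m) (fun y => if Rlt_dec 0 (P x y) then P x y else 0) = 1).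
    { intro x. rewrite <- (Hsum x). rewrite sumR_L. apply sumL_ext. intros y Hy.
      apply in_seq in Hy. destruct (Rlt_dec 0 (P x y)); auto.
      assert (0 <= P x y) by (apply Hnn; lia). lra. }
    unfold avgX. rewrite !H. lra.
  - assert (H: forall x, sumL (seq 0 m) (fun y => if Rlt_dec 0 (P x y) then
        P x y * (ln (/2*(P false y + P true y)) - ln (P x y)) else 0) =
        - ln 2 * sumR m (fun y => if Rlt_dec 0 (P x y) then P x y * log2 (P x y / PY P y) else 0)).
    { intro x. rewrite sumR_L, <- sumL_scal. apply sumL_ext. intros y Hy.
      apply in_seq in Hy. destruct (Rlt_dec 0 (P x y)); [|ring].
      unfold log2. rewrite PY_ln; try (apply Hnn; lia); auto. unfold PY. field. lra. }
    unfold capacity, avgX. rewrite !H. ring.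
  - assert (H: forall x, sumL (seq 0 m) (fun y => if Rlt_dec 0 (P x y) then
        P x y * ((ln (/2*(P false y + P true y)) - ln (P x y)) * (ln (/2*(P false y + P true y)) - ln (P x y))
          + 2*(ln (P x y) - (/2*(xl (P false y) + xl (P true y))) / (/2*(P false y + P true y)))) else 0) =
        ln 2 * ln 2 * sumR m (fun y => if Rlt_dec 0 (P x y) then P x y * (log2 (P x y / PY P y) * log2 (P x y / PY P y)) else 0)
        + 2 * sumL (seq 0 m) (fun y => if Rlt_dec 0 (P x y) then
           P x y * (ln (P x y) - (/2*(xl (P false y) + xl (P true y))) / (/2*(P false y + P true y))) else 0)).
    { intro x. rewrite sumR_L, <- !sumL_scal, <- sumL_plus. apply sumL_ext. intros y Hy.
      apply in_seq in Hy. destruct (Rlt_dec 0 (P x y)); [|ring].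
      unfold log2. rewrite PY_ln; try (apply Hnn; lia); auto. assert (0 <= P false y) by (apply Hnn; lia). assert (0 <= P true y) by (apply Hnn; lia).
      assert (P false y + P true y <> 0) by (destruct x; lra). unfold PY. field; split; lra. }
    assert (Z : avgX (fun x => sumL (seq 0 m) (fun y => if Rlt_dec 0 (P x y) then
           P x y * (ln (P x y) - (/2*(xl (P false y) + xl (P true y))) / (/2*(P false y + P true y))) else 0)) = 0).
    { rewrite swap_avg. transitivity (sumL (seq 0 m) (fun _ => 0)); [|apply sumL_zero]. apply sumL_ext. intros y Hy.
      apply in_seq in Hy.
      assert (A0 : 0 <= P false y) by (apply Hnn; lia).
      assert (A1 : 0 <= P true y) by (apply Hnn; lia).
      unfold avgX, xl.
      destruct (Rlt_dec 0 (P false y)); destruct (Rlt_dec 0 (P true y));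
      destruct (Rle_dec (P false y) 0); destruct (Rle_dec (P true y) 0); try lra.
      - field. lra.
      - replace (P true y) with 0 by lra. field. lra.
      - replace (P false y) with 0 by lra. field. lra. }
    unfold M2. unfold avgX in *. rewrite !H. lra.
Qed.

Lemma ln2_pos : 0 < ln 2.
Proof. rewrite <- ln_1; apply ln_increasing; lra. Qed.

Lemma pw_pos p y : 0 < p -> 0 < pw p y.
Proof. intros; unfold pw; destruct (Rle_dec p 0). lra. apply exp_pos. Qed.

Lemma pw_nonneg p y : 0 <= pw p y.
Proof. unfold pw; destruct (Rle_dec p 0). lra. left; apply exp_pos. Qed.

Lemma sum_pos l f g : (forall y, In y l -> 0 <= f y) -> (forall y, In y l -> 0 < g y -> 0 < f y) ->
  (forall y, In y l -> 0 <= g y) -> sumL l g = 1 -> 0 < sumL l f.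
Proof.
  intros Hf Hfg Hg Hs.
  destruct (Rle_lt_dec (sumL l f) 0) as [H|H]; auto.
  assert (E : sumL l f = 0) by (assert (0 <= sumL l f) by (apply sumL_nonneg; auto); lra).
  assert (Z := sumL_zero_each l f Hf E).
  assert (sumL l g = sumL l (fun _ => 0)).
  { apply sumL_ext. intros y Hy. destruct (Hg y Hy); auto.
    specialize (Hfg y Hy H0). rewrite Z in Hfg; auto. lra. }
  rewrite sumL_zero in H0. lra.
Qed.

Lemma F_pos m P r : is_channel m P -> Rabs r < /2 -> 0 < F m P r.
Proof.
  intros [Hnn Hsum] Hr. apply Rabs_def2 in Hr.
  assert (H : forall x, 0 < sumR m (fun y => if Rlt_dec 0 (P x y) then
      P x y * pw ((/2 * (pw (P false y) (/(1+r)) + pw (P true y) (/(1+r)))) / pw (P x y) (/(1+r))) r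
      else 0)).
  { intro x. rewrite sumR_L. apply (sum_pos _ _ (P x)).
    - intros y _. destruct (Rlt_dec 0 (P x y)). apply Rmult_le_pos. lra. apply pw_nonneg. lra.
    - intros y _ Hp. destruct (Rlt_dec 0 (P x y)); [|lra].
      apply Rmult_lt_0_compat; auto. apply pw_pos.
      assert (0 < pw (P x y) (/ (1 + r))) by (apply pw_pos; auto).
      assert (0 <= pw (P false y) (/ (1 + r))) by apply pw_nonneg.
      assert (0 <= pw (P true y) (/ (1 + r))) by apply pw_nonneg.
      apply Rdiv_lt_0_compat; auto. destruct x; lra.
    - intros y Hy. apply in_seq in Hy. apply Hnn; lia.
    - rewrite <- sumR_L; auto. }
  unfold F, avgX. specialize (H false) as H0. specialize (H true) as H1. lra.
Qed.

Lemma D2_E0 m P : is_channel m P ->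
  D2 (E0 m P) 0 (capacity m P)
    (- (ln 2 * (M2 m P - capacity m P * capacity m P))).
Proof.
  intros Hc. assert (L := ln2_pos).
  eapply D2_eq. eapply D2_ext.
  apply (D2_mult (fun _ => - / ln 2) (fun r => ln (F m P r))).
  apply D2_const. apply D2_ln. apply D2_F; auto.
  intros; apply F_pos; auto. lra.
  - intros r Hr. unfold E0, log2. field. apply Rgt_not_eq; auto.
  - rewrite ln_1. ring.
  - field. lra.
  - field. lra.
Qed.

Lemma D2_Fbec C : 0 <= C <= 1 ->
  D2 (fun rho => - log2 (Fbec rho C)) 0 C (- (ln 2 * (C - C * C))).
Proof.
  intros HC. assert (L := ln2_pos).
  assert (Hpos : forall r, Rabs r < /2 -> 0 < 1 + (exp (r * - ln 2) - 1) * C).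
  { intros r _. assert (0 < exp (r * - ln 2)) by apply exp_pos.
    destruct (Rle_lt_dec 1 (exp (r * - ln 2))); nra. }
  eapply D2_eq. eapply D2_ext.
  apply (D2_mult (fun _ => - / ln 2) (fun r => ln (1 + (exp (r * - ln 2) - 1) * C))).
  apply D2_const. apply D2_ln.
  apply D2_plus. apply D2_const. apply D2_mult. apply D2_plus. apply D2_exp.
  apply D2_mult. apply D2_id. apply D2_const. apply D2_const. apply D2_const.
  exact Hpos. rewrite Rmult_0_l, exp_0. lra.
  - intros r Hr. unfold Fbec, log2, Rpower. replace (- r * ln 2) with (r * - ln 2) by ring. field; apply Rgt_not_eq; auto.
  - rewrite Rmult_0_l, exp_0. replace (1 + (1 + - (1)) * C) with 1 by ring. rewrite ln_1. ring.
  - replace (0 * - ln 2) with 0 by ring. rewrite exp_0. field. lra.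
  - replace (0 * - ln 2) with 0 by ring. rewrite exp_0. field. lra.
Qed.

Definition S1 t := t * ln t + (1 - t) * ln (1 - t).
Definition S2 t := t * (ln t * ln t) + (1 - t) * (ln (1 - t) * ln (1 - t)).
Definition cq t := 1 + S1 t / ln 2.
Definition fq t := 1 + 2 * S1 t / ln 2 + S2 t / (ln 2 * ln 2).

Lemma D2_Fbsc eps : 0 < eps < 1 ->
  D2 (fun rho => - log2 (Fbsc rho eps)) 0 (cq eps)
     (- (ln 2 * (fq eps - cq eps * cq eps))).
Proof.
  intros He. assert (L := ln2_pos).
  set (a := ln eps). set (b := ln (1 - eps)).
  assert (Ea : exp a = eps) by (apply exp_ln; lra).
  assert (Eb : exp b = 1 - eps) by (apply exp_ln; lra).
  eapply D2_eq. eapply D2_ext.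
  apply (D2_mult (fun _ => - / ln 2)
    (fun r => r * (- ln 2) + (1 + r) * ln (exp (a * / (1 + r)) + exp (b * / (1 + r))))).
  apply D2_const. apply D2_plus. apply D2_mult. apply D2_id. apply D2_const.
  apply D2_mult. apply D2_plus. apply D2_const. apply D2_id.
  apply D2_ln. apply D2_plus; apply D2_exp; apply D2_mult; try apply D2_const; apply D2_s.
  intros r _. assert (0 < exp (a * / (1 + r))) by apply exp_pos.
  assert (0 < exp (b * / (1 + r))) by apply exp_pos. lra.
  rewrite !Rmult_1_r, Ea, Eb. lra.
  - intros r Hr. apply Rabs_def2 in Hr.
    unfold Fbsc, log2, pw; unfold Rpower.
    destruct (Rle_dec eps 0); [lra|]. destruct (Rle_dec (1 - eps) 0); [lra|].
    set (S := exp (/ (1 + r) * ln eps) + exp (/ (1 + r) * ln (1 - eps))).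
    assert (HS : 0 < S) by (unfold S; assert (H1 := exp_pos (/ (1 + r) * ln eps));
       assert (H2 := exp_pos (/ (1 + r) * ln (1 - eps))); lra).
    destruct (Rle_dec S 0); [lra|].
    rewrite ln_mult, !ln_exp by apply exp_pos.
    unfold S, a, b. rewrite (Rmult_comm (ln eps)), (Rmult_comm (ln (1 - eps))).
    field. lra.
  - rewrite !Rmult_1_r, Ea, Eb. replace (eps + (1 - eps)) with 1 by ring. rewrite ln_1. ring.
  - rewrite !Rmult_1_r, Ea, Eb. replace (eps + (1 - eps)) with 1 by ring. rewrite ln_1.
    unfold cq, S1. fold a b. field. lra.
  - rewrite !Rmult_1_r, Ea, Eb. replace (eps + (1 - eps)) with 1 by ring. rewrite ln_1.
    unfold cq, fq, S1, S2. fold a b. field. lra.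
Qed.

Lemma D2_Fbsc0 : D2 (fun rho => - log2 (Fbsc rho 0)) 0 1 0.
Proof.
  eapply D2_ext. apply D2_id.
  intros r Hr. apply Rabs_def2 in Hr. assert (L := ln2_pos).
  unfold Fbsc, log2, Rpower, pw.
  destruct (Rle_dec 0 0); [|lra]. replace (1 - 0) with 1 by ring.
  unfold Fbsc, log2, pw.
  destruct (Rle_dec 1 0); [lra|].
  assert (E1: Rpower 1 (/(1+r)) = 1) by (unfold Rpower; rewrite ln_1, Rmult_0_r, exp_0; auto).
  rewrite E1, Rplus_0_l. destruct (Rle_dec 1 0); [lra|].
  unfold Rpower; rewrite ln_1, Rmult_0_r, exp_0, Rmult_1_r, ln_exp. field. lra.
Qed.

Lemma ln_le_m1 x : 0 < x -> ln x <= x - 1.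
Proof.
  intros Hx. destruct (Req_dec (ln x) 0) as [E|E].
  - rewrite E. assert (x = 1). { rewrite <- (exp_ln x) by auto. rewrite E, exp_0; auto. } lra.
  - assert (H := exp_ineq1 (ln x) E). rewrite exp_ln in H; lra.
Qed.

Lemma ln_ge x : 0 < x -> 1 - / x <= ln x.
Proof.
  intros Hx. assert (H := ln_le_m1 (/ x) (Rinv_0_lt_compat _ Hx)).
  rewrite ln_Rinv in H; lra.
Qed.

Lemma dmult f g x a b : derivable_pt_lim f x a -> derivable_pt_lim g x b ->
  derivable_pt_lim (fun t => f t * g t) x (a * g x + f x * b).
Proof. intros; exact (derivable_pt_lim_mult f g x a b H H0). Qed.
Lemma dplus f g x a b : derivable_pt_lim f x a -> derivable_pt_lim g x b ->
  derivable_pt_lim (fun t => f t + g t) x (a + b).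
Proof. intros; exact (derivable_pt_lim_plus f g x a b H H0). Qed.
Lemma dconst c x : derivable_pt_lim (fun _ => c) x 0.
Proof. exact (derivable_pt_lim_const c x). Qed.
Lemma did x : derivable_pt_lim (fun t => t) x 1.
Proof. exact (derivable_pt_lim_id x). Qed.
Lemma dcomp f g x a b : derivable_pt_lim g x a -> derivable_pt_lim f (g x) b ->
  derivable_pt_lim (fun t => f (g t)) x (b * a).
Proof. intros; exact (derivable_pt_lim_comp g f x a b H H0). Qed.
Lemma dext f g x a b : derivable_pt_lim f x a -> (forall t, f t = g t) -> a = b -> derivable_pt_lim g x b.
Proof. intros H E <-. exact (derivable_pt_lim_ext f g x a E H). Qed.

Definition kq t := 2 + 2 / ln 2 + (ln t + ln (1 - t)) / ln 2.

Lemma dphi K t : 0 < t < 1 ->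
  derivable_pt_lim (fun t => fq t - K * cq t) t ((ln t - ln (1 - t)) / ln 2 * (kq t - K)).
Proof.
  intros Ht. assert (L := ln2_pos).
  assert (Dl : derivable_pt_lim ln t (/ t)) by (apply derivable_pt_lim_ln; lra).
  assert (D1m : derivable_pt_lim (fun t => 1 - t) t (-1)).
  { eapply dext. apply dplus with (f:=fun _ => 1) (g := fun t => -1 * t). apply dconst.
    apply dmult with (f := fun _ => -1). apply dconst. apply did. intro; cbv beta; ring. ring. }
  assert (Dl1 : derivable_pt_lim (fun t => ln (1 - t)) t (/ (1 - t) * -1)).
  { apply (dcomp ln (fun t => 1 - t)). exact D1m. apply derivable_pt_lim_ln. lra. }
  assert (DS1 : derivable_pt_lim S1 t (ln t - ln (1 - t))).
  { eapply dext. apply dplus. apply dmult. apply did. exact Dl.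
    apply dmult. exact D1m. exact Dl1.
    intro; cbv beta; unfold S1; ring. cbv beta. field. lra. }
  assert (DS2 : derivable_pt_lim S2 t (ln t * ln t + 2 * ln t - ln (1-t) * ln (1-t) - 2 * ln (1-t))).
  { eapply dext. apply dplus. apply dmult. apply did. apply dmult. exact Dl. exact Dl.
    apply dmult. exact D1m.
    apply dmult. exact Dl1. exact Dl1.
    intro; cbv beta; unfold S2; ring. cbv beta. field. lra. }
  eapply dext.
  apply dplus. apply dplus. apply dplus. apply (dconst 1).
  apply dmult with (f := fun t => 2 * S1 t) (g := fun _ => / ln 2).
  apply dmult. apply dconst. exact DS1. apply dconst.
  apply dmult with (g := fun _ => / (ln 2 * ln 2)). exact DS2. apply dconst.
  apply dmult with (f := fun _ => -K). apply dconst.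
  apply dplus. apply (dconst 1). apply dmult with (g := fun _ => / ln 2). exact DS1. apply dconst.
  - intro x. cbv beta. unfold fq, cq. field. lra.
  - unfold kq. field. lra.
Qed.

Lemma S1_sym p : S1 (1 - p) = S1 p.
Proof. unfold S1. replace (1 - (1 - p)) with p by ring. ring. Qed.
Lemma S2_sym p : S2 (1 - p) = S2 p.
Proof. unfold S2. replace (1 - (1 - p)) with p by ring. ring. Qed.
Lemma cq_sym p : cq (1 - p) = cq p.
Proof. unfold cq; rewrite S1_sym; auto. Qed.
Lemma fq_sym p : fq (1 - p) = fq p.
Proof. unfold fq; rewrite S1_sym, S2_sym; auto. Qed.

Lemma ln_neg t : 0 < t < 1 -> ln t < 0.
Proof. intros. rewrite <- ln_1. apply ln_increasing; lra. Qed.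

Lemma kq_lt s t : 0 < s -> s < t -> t <= /2 -> kq s < kq t.
Proof.
  intros. unfold kq. assert (L := ln2_pos).
  rewrite <- !ln_mult by lra.
  assert (ln (s * (1 - s)) < ln (t * (1 - t))).
  { apply ln_increasing. apply Rmult_lt_0_compat; lra. nra. }
  apply Rplus_lt_compat_l. unfold Rdiv. apply Rmult_lt_compat_r. apply Rinv_0_lt_compat; lra. auto.
Qed.

Lemma lndiff_neg t : 0 < t < /2 -> (ln t - ln (1 - t)) / ln 2 < 0.
Proof.
  intros. assert (L := ln2_pos). assert (ln t < ln (1 - t)) by (apply ln_increasing; lra).
  unfold Rdiv. assert (0 < / ln 2) by (apply Rinv_0_lt_compat; lra). nra.
Qed.

Lemma tangent_half p q : 0 < p <= /2 -> 0 < q <= /2 ->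
  fq p - kq q * cq p <= fq q - kq q * cq q.
Proof.
  intros Hp Hq.
  set (phi := fun t => fq t - kq q * cq t).
  set (phi' := fun t => (ln t - ln (1 - t)) / ln 2 * (kq t - kq q)).
  change (phi p <= phi q).
  destruct (Rtotal_order p q) as [H|[H|H]].
  - destruct (MVT_cor2 phi phi' p q H) as [c [E Hc]].
    { intros c Hc. apply dphi. lra. }
    assert (phi' c > 0).
    { unfold phi'. assert (A := lndiff_neg c ltac:(lra)). assert (B := kq_lt c q ltac:(lra) ltac:(lra) ltac:(lra)). nra. }
    nra.
  - subst; lra.
  - destruct (MVT_cor2 phi phi' q p H) as [c [E Hc]].
    { intros c Hc. apply dphi. lra. }
    assert (phi' c < 0).
    { unfold phi'. assert (A := lndiff_neg c ltac:(lra)). assert (B := kq_lt q c ltac:(lra) ltac:(lra) ltac:(lra)). nra. }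
    nra.
Qed.

Lemma tangent p q : 0 < p < 1 -> 0 < q <= /2 ->
  fq p - kq q * cq p <= fq q - kq q * cq q.
Proof.
  intros Hp Hq. destruct (Rle_lt_dec p (/2)).
  - apply tangent_half; lra.
  - rewrite <- fq_sym, <- cq_sym. apply tangent_half; lra.
Qed.

Lemma endpoint q : 0 < q <= /2 -> 1 - kq q <= fq q - kq q * cq q.
Proof.
  intros Hq. assert (L := ln2_pos).
  assert (E : fq q - kq q * cq q - (1 - kq q) =
    (- 2 * q * ln q - 2 * (1 - q) * ln (1 - q) - ln q * ln (1 - q)) / (ln 2 * ln 2)).
  { unfold fq, kq, cq, S1, S2. field. lra. }
  assert (a := ln_neg q ltac:(lra)). assert (b := ln_neg (1 - q) ltac:(lra)).
  assert (c := ln_ge (1 - q) ltac:(lra)).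
  assert (d : - (2 * q) <= ln (1 - q)).
  { assert (1 - / (1 - q) >= - (2 * q)).
    { assert (/ (1 - q) <= 2). { rewrite <- (Rinv_inv 2). apply Rinv_le_contravar; lra. }
      assert (q * / (1 - q) <= q * 2) by (apply Rmult_le_compat_l; lra).
      replace (1 - / (1 - q)) with (- (q * / (1 - q))) by (field; lra). lra. }
    lra. }
  assert (0 <= (- 2 * q * ln q - 2 * (1 - q) * ln (1 - q) - ln q * ln (1 - q))) by nra.
  assert (0 <= (- 2 * q * ln q - 2 * (1 - q) * ln (1 - q) - ln q * ln (1 - q)) / (ln 2 * ln 2)).
  { unfold Rdiv. apply Rmult_le_pos; auto. left; apply Rinv_0_lt_compat; nra. }
  lra.
Qed.

Lemma cq_bounds p : 0 < p < 1 -> 0 <= cq p < 1.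
Proof.
  intros Hp. assert (L := ln2_pos). unfold cq, S1.
  assert (a := ln_neg p Hp). assert (b := ln_neg (1 - p) ltac:(lra)).
  assert (c := ln_ge (2 * p) ltac:(lra)). assert (d := ln_ge (2 * (1 - p)) ltac:(lra)).
  rewrite ln_mult in c, d by lra.
  assert (e : p * (1 - / (2 * p)) <= p * (ln 2 + ln p)) by (apply Rmult_le_compat_l; lra).
  assert (f : (1 - p) * (1 - / (2 * (1 - p))) <= (1 - p) * (ln 2 + ln (1 - p))) by (apply Rmult_le_compat_l; lra).
  replace (p * (1 - / (2 * p))) with (p - /2) in e by (field; lra).
  replace ((1 - p) * (1 - / (2 * (1 - p)))) with ((1 - p) - /2) in f by (field; lra).
  assert (g : p * ln p + (1 - p) * ln (1 - p) < 0) by nra.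
  assert (h : - ln 2 <= p * ln p + (1 - p) * ln (1 - p)) by nra.
  split.
  - apply (Rmult_le_reg_r (ln 2)); auto. rewrite Rmult_plus_distr_r. unfold Rdiv. rewrite Rmult_assoc, Rinv_l; lra.
  - apply (Rmult_lt_reg_r (ln 2)); auto. rewrite Rmult_plus_distr_r. unfold Rdiv. rewrite Rmult_assoc, Rinv_l; lra.
Qed.

Lemma half_vals : fq (/2) = 0 /\ cq (/2) = 0.
Proof.
  assert (L := ln2_pos).
  replace (1 - /2) with (/2) by field. unfold fq, cq, S1, S2.
  replace (1 - /2) with (/2) by field. rewrite ln_Rinv by lra. split; field; lra.
Qed.

Lemma fq_ge_cq p : 0 < p < 1 -> cq p <= fq p.
Proof.
  intros Hp.
  assert (Hw : forall p, 0 < p <= /2 -> cq p <= fq p).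
  { clear p Hp. intros p Hp.
    assert (E1 := endpoint p Hp).
    assert (E2 := tangent_half (/2) p ltac:(lra) Hp).
    destruct half_vals as [H1 H2]. rewrite H1, H2 in E2.
    assert (Hc := cq_bounds p ltac:(lra)).
    set (c := cq p) in *. set (k := kq p) in *. set (f := fq p) in *.
    assert (0 <= c * (f - k * c - (1 - k))) by (apply Rmult_le_pos; lra).
    assert (0 <= (1 - c) * (f - k * c)) by (apply Rmult_le_pos; lra).
    nra. }
  destruct (Rle_lt_dec p (/2)). apply Hw; lra.
  rewrite <- fq_sym, <- cq_sym. apply Hw; lra.
Qed.

Definition capY a b := /2 * (if Rlt_dec 0 a then a * log2 (a / (/2*(a+b))) else 0)
  + /2 * (if Rlt_dec 0 b then b * log2 (b / (/2*(a+b))) else 0).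
Definition m2Y a b := /2 * (if Rlt_dec 0 a then a * (log2 (a / (/2*(a+b))) * log2 (a / (/2*(a+b)))) else 0)
  + /2 * (if Rlt_dec 0 b then b * (log2 (b / (/2*(a+b))) * log2 (b / (/2*(a+b)))) else 0).

Lemma log2_2p p : 0 < p -> log2 (2 * p) = 1 + ln p / ln 2.
Proof. intros. assert (L := ln2_pos). unfold log2. rewrite ln_mult by lra. field. lra. Qed.

Lemma log2_2 : log2 2 = 1.
Proof. assert (L := ln2_pos). unfold log2. field. lra. Qed.

Lemma Ycases a b : 0 <= a -> 0 <= b ->
  (0 < a / (a + b) < 1 /\ capY a b = /2*(a+b) * cq (a / (a + b)) /\ m2Y a b = /2*(a+b) * fq (a / (a + b))
    /\ 0 < /2 * (a + b))
  \/ (capY a b = /2*(a+b) /\ m2Y a b = /2*(a+b)).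
Proof.
  intros Ha Hb. assert (L := ln2_pos). unfold capY, m2Y.
  destruct (Rlt_dec 0 a); destruct (Rlt_dec 0 b).
  - left. set (p := a / (a + b)).
    assert (Hp : 0 < p < 1).
    { unfold p; split. apply Rdiv_lt_0_compat; lra.
      apply (Rmult_lt_reg_r (a + b)). lra. unfold Rdiv. rewrite Rmult_assoc, Rinv_l; lra. }
    assert (E1 : a / (/2 * (a+b)) = 2 * p) by (unfold p; field; lra).
    assert (E2 : b / (/2 * (a+b)) = 2 * (1 - p)) by (unfold p; field; lra).
    assert (Ea : a = (a + b) * p) by (unfold p; field; lra).
    assert (Eb : b = (a + b) * (1 - p)) by (unfold p; field; lra).
    rewrite E1, E2, !log2_2p by lra.
    repeat split; try lra.
    + unfold cq, S1, p. field. split; lra.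
    + unfold fq, S1, S2, p. field. split; lra.
  - right. assert (b = 0) by lra. subst b. rewrite Rplus_0_r.
    replace (a / (/2 * a)) with 2 by (field; lra). rewrite log2_2. split; ring.
  - right. assert (a = 0) by lra. subst a. rewrite Rplus_0_l.
    replace (b / (/2 * b)) with 2 by (field; lra). rewrite log2_2. split; ring.
  - right. assert (a = 0) by lra. assert (b = 0) by lra. subst. split; ring.
Qed.

Lemma Y1 a b : 0 <= a -> 0 <= b -> capY a b <= m2Y a b.
Proof.
  intros Ha Hb. destruct (Ycases a b Ha Hb) as [[Hp [E1 [E2 Hw]]]|[E1 E2]]; rewrite E1, E2; [|lra].
  apply Rmult_le_compat_l; [lra|]. apply fq_ge_cq; auto.
Qed.

Lemma Y2 a b q : 0 <= a -> 0 <= b -> 0 < q <= /2 ->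
  m2Y a b <= /2*(a+b) * fq q + kq q * (capY a b - /2*(a+b) * cq q).
Proof.
  intros Ha Hb Hq. destruct (Ycases a b Ha Hb) as [[Hp [E1 [E2 Hw]]]|[E1 E2]]; rewrite E1, E2.
  - assert (T := tangent _ _ Hp Hq).
    assert (0 <= /2*(a+b) * ((fq q - kq q * cq q) - (fq (a / (a + b)) - kq q * cq (a / (a + b))))).
    { apply Rmult_le_pos; lra. }
    nra.
  - assert (T := endpoint q Hq).
    assert (0 <= /2*(a+b) * ((fq q - kq q * cq q) - (1 - kq q))).
    { apply Rmult_le_pos; lra. }
    nra.
Qed.

Lemma Y3 a b : 0 <= a -> 0 <= b -> 0 <= capY a b <= /2*(a+b).
Proof.
  intros Ha Hb. destruct (Ycases a b Ha Hb) as [[Hp [E1 [E2 Hw]]]|[E1 E2]]; rewrite E1; [|lra].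
  assert (B := cq_bounds _ Hp). split. apply Rmult_le_pos; lra.
  rewrite <- (Rmult_1_r (/2*(a+b))) at 2. apply Rmult_le_compat_l; lra.
Qed.

Lemma Y4 a b : 0 <= a -> 0 <= b -> capY a b = /2*(a+b) -> m2Y a b = /2*(a+b).
Proof.
  intros Ha Hb H. destruct (Ycases a b Ha Hb) as [[Hp [E1 [E2 Hw]]]|[E1 E2]]; auto.
  assert (B := cq_bounds _ Hp). rewrite E1 in H.
  assert (/ 2 * (a + b) * cq (a / (a + b)) < / 2 * (a + b) * 1) by (apply Rmult_lt_compat_l; lra). lra.
Qed.

Lemma swap_avgR m (f : bool -> nat -> R) :
  avgX (fun x => sumR m (f x)) = sumL (seq 0 m) (fun y => avgX (fun x => f x y)).
Proof. exact (swap_avg (seq 0 m) f). Qed.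

Theorem mainTheorem11 (m : nat) (P : bool -> nat -> R) :
  is_BIMS m P ->
  exists V Vbec : R,
    second_deriv (E0 m P) 0 (- V) /\
    second_deriv (fun rho => - log2 (Fbec rho (capacity m P))) 0 (- Vbec) /\
    Vbec <= V /\
    (forall eps : R, 0 <= eps <= / 2 -> hb eps = 1 - capacity m P ->
       exists Vbsc : R,
         second_deriv (fun rho => - log2 (Fbsc rho eps)) 0 (- Vbsc) /\
         V <= Vbsc).
Proof.
  intros [Hch _]. pose proof Hch as [Hnn Hsum].
  assert (L := ln2_pos).
  assert (HC : capacity m P = sumL (seq 0 m) (fun y => capY (P false y) (P true y))).
  { unfold capacity. rewrite swap_avgR. apply sumL_ext. intros y _. reflexivity. }
  assert (HM : M2 m P = sumL (seq 0 m) (fun y => m2Y (P false y) (P true y))).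
  { unfold M2. rewrite swap_avgR. apply sumL_ext. intros y _. reflexivity. }
  assert (HW : sumL (seq 0 m) (fun y => /2*(P false y + P true y)) = 1).
  { rewrite sumL_scal, sumL_plus. rewrite <- !sumR_L, !Hsum. field. }
  assert (Hab : forall y, In y (seq 0 m) -> 0 <= P false y /\ 0 <= P true y).
  { intros y Hy. apply in_seq in Hy. split; apply Hnn; lia. }
  set (C := capacity m P) in *. set (M := M2 m P) in *.
  assert (HCb : 0 <= C <= 1).
  { rewrite HC. split. apply sumL_nonneg. intros y Hy. destruct (Hab y Hy). apply Y3; auto.
    rewrite <- HW. apply sumL_le. intros y Hy. destruct (Hab y Hy). apply Y3; auto. }
  assert (HCM : C <= M).
  { rewrite HC, HM. apply sumL_le. intros y Hy. destruct (Hab y Hy). apply Y1; auto. }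
  exists (ln 2 * (M - C * C)), (ln 2 * (C - C * C)).
  split; [|split; [|split]].
  - apply (D2_second _ 0 C). apply D2_E0; auto.
  - apply (D2_second _ 0 C). apply D2_Fbec; auto.
  - apply Rmult_le_compat_l; lra.
  - intros eps Heps Hhb. destruct (Req_dec eps 0) as [E|E].
    + subst eps. exists 0. split.
      * rewrite Ropp_0. apply (D2_second _ 0 1). apply D2_Fbsc0.
      * assert (HC1 : C = 1).
        { unfold hb, xlog2 in Hhb. destruct (Rle_dec 0 0); [|lra].
          replace (1 - 0) with 1 in Hhb by ring. destruct (Rle_dec 1 0); [lra|].
          unfold log2 in Hhb. rewrite ln_1 in Hhb. lra. }
        assert (HM1 : M = 1).
        { assert (Z : sumL (seq 0 m) (fun y => /2*(P false y + P true y) - capY (P false y) (P true y)) = 0).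
          { transitivity (sumL (seq 0 m) (fun y => /2*(P false y + P true y)) + (-1) * sumL (seq 0 m) (fun y => capY (P false y) (P true y))).
            rewrite <- sumL_scal, <- sumL_plus. apply sumL_ext; intros; ring.
            rewrite HW, <- HC. lra. }
          assert (Z2 := sumL_zero_each (seq 0 m) (fun y => /2*(P false y + P true y) - capY (P false y) (P true y))).
          assert (Z3 : forall y, In y (seq 0 m) -> /2*(P false y + P true y) - capY (P false y) (P true y) = 0).
          { apply Z2; auto. intros y Hy; destruct (Hab y Hy) as [Ha Hb]; assert (Y := Y3 _ _ Ha Hb); lra. }
          rewrite HM, <- HW. apply sumL_ext. intros y Hy. destruct (Hab y Hy).
          apply Y4; auto. specialize (Z3 y Hy). lra. }
        rewrite HC1, HM1. lra.
    + assert (He : 0 < eps <= /2) by lra.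
      exists (ln 2 * (fq eps - cq eps * cq eps)). split.
      * apply (D2_second _ 0 (cq eps)). apply D2_Fbsc; lra.
      * assert (Hc : cq eps = C).
        { unfold hb, xlog2 in Hhb. destruct (Rle_dec eps 0); [lra|]. destruct (Rle_dec (1 - eps) 0); [lra|].
          unfold cq, S1. unfold log2 in Hhb. rewrite <- (Rplus_0_r C).
          replace C with (1 - (- (eps * (ln eps / ln 2)) - (1 - eps) * (ln (1 - eps) / ln 2))) by lra.
          field. lra. }
        assert (HMf : M <= fq eps).
        { rewrite HM. eapply Rle_trans. apply sumL_le.
          intros y Hy. destruct (Hab y Hy). apply (Y2 _ _ eps); auto.
          set (W := sumL (seq 0 m) (fun y => /2*(P false y + P true y))) in *.
          replace (sumL (seq 0 m) (fun y => /2*(P false y + P true y) * fq eps + kq eps * (capY (P false y) (P true y) - /2*(P false y + P true y) * cq eps)))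
            with (fq eps * W + (kq eps * sumL (seq 0 m) (fun y => capY (P false y) (P true y)) + (- (kq eps * cq eps)) * W)).
          rewrite HW, <- HC, Hc. lra.
          unfold W. rewrite <- !sumL_scal, <- !sumL_plus. apply sumL_ext; intros; ring. }
        rewrite Hc. apply Rmult_le_compat_l; lra.
Qed.
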